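(* Let $A=[a_{ij}]\in\mathcal{M}_3(\mathbb{H})$ be a strictly upper triangular (hence nilpotent) matrix. Then $W(A)$ is a closed disk centered at the origin if and only if $A$ is cycle-free, i.e. if and only if $a_{12}a_{13}a_{23}=0$ (at least one of $a_{12},a_{13},a_{23}$ vanishes).
   Context: $\mathbb{H}$ denotes the real quaternions. The numerical range of $A\in\mathcal{M}_n(\mathbb{H})$ is $W(A)=\{\mathbf{x}^*A\mathbf{x}:\mathbf{x}\in\mathbb{H}^n,\ \mathbf{x}^*\mathbf{x}=1\}$; a closed disk centered at the origin is $\{q\in\mathbb{H}:|q|\le r\}$ for some $r\ge0$. The graph $\mathcal{G}_A$ of $A=[a_{ij}]$ is the undirected graph on $\{1,\dots,n\}$ with an edge between $i$ and $j$ (a loop if $i=j$) whenever $a_{ij}\ne0$ or $a_{ji}\ne0$; $A$ is cycle-free if $\mathcal{G}_A$ contains no cycle. *)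

(* Defs.v *)
(* Quaternions over an arbitrary real closed field R
   (the paper's H is the case R = the reals). *)
From HB Require Import structures.
From mathcomp Require Import all_boot all_order all_algebra.
Set Implicit Arguments. Unset Strict Implicit. Unset Printing Implicit Defensive.
Import Order.TTheory GRing.Theory Num.Theory.
Local Open Scope ring_scope.

Section Quat.
Variable R : rcfType.

(* q = q0 + q1 i + q2 j + q3 k *)
Record quat := Quat { q0 : R; q1 : R; q2 : R; q3 : R }.

Definition quat_to (q : quat) := (q0 q, q1 q, q2 q, q3 q).
Definition quat_of (t : R * R * R * R) :=
  let: (a, b, c, d) := t in Quat a b c d.
Lemma quat_toK : cancel quat_to quat_of. Proof. by case. Qed.
HB.instance Definition _ := Equality.copy quat (can_type quat_toK).

Definition qzero : quat := Quat 0 0 0 0.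
Definition qadd (p q : quat) : quat :=
  Quat (q0 p + q0 q) (q1 p + q1 q) (q2 p + q2 q) (q3 p + q3 q).
Definition qmul (p q : quat) : quat :=
  Quat (q0 p * q0 q - q1 p * q1 q - q2 p * q2 q - q3 p * q3 q)
       (q0 p * q1 q + q1 p * q0 q + q2 p * q3 q - q3 p * q2 q)
       (q0 p * q2 q - q1 p * q3 q + q2 p * q0 q + q3 p * q1 q)
       (q0 p * q3 q + q1 p * q2 q - q2 p * q1 q + q3 p * q0 q).
Definition qconj (q : quat) : quat := Quat (q0 q) (- q1 q) (- q2 q) (- q3 q).
Definition qnorm2 (q : quat) : R := q0 q ^+ 2 + q1 q ^+ 2 + q2 q ^+ 2 + q3 q ^+ 2.
Definition qnorm (q : quat) : R := Num.sqrt (qnorm2 q).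

Definition vnorm2 n (x : 'I_n -> quat) : R := \sum_(i < n) qnorm2 (x i).

Definition quadform n (A : 'M[quat]_n) (x : 'I_n -> quat) : quat :=
  \big[qadd/qzero]_(i < n) \big[qadd/qzero]_(j < n)
     qmul (qmul (qconj (x i)) (A i j)) (x j).

Definition numrange n (A : 'M[quat]_n) (q : quat) : Prop :=
  exists x : 'I_n -> quat, vnorm2 x = 1 /\ quadform A x = q.

Definition is_closed_disk0 (S : quat -> Prop) : Prop :=
  exists r : R, 0 <= r /\ forall q, S q <-> qnorm q <= r.

Definition graph_edge n (A : 'M[quat]_n) : rel 'I_n :=
  fun i j => (A i j != qzero) || (A j i != qzero).

Definition cycle_free n (A : 'M[quat]_n) : Prop :=
  (forall i, ~~ graph_edge A i i) /\
  (forall s : seq 'I_n, uniq s -> (3 <= size s)%N -> ~~ cycle (graph_edge A) s).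

Definition strictly_upper n (A : 'M[quat]_n) : Prop :=
  forall i j : 'I_n, (j <= i)%N -> A i j = qzero.

End Quat.

(* 1-based indices 1,2,3 of the paper as elements of 'I_3 *)
Definition i1 : 'I_3 := @Ordinal 3 0 isT.
Definition i2 : 'I_3 := @Ordinal 3 1 isT.
Definition i3 : 'I_3 := @Ordinal 3 2 isT.

(* Main.v *)
Require Import Defs.
From HB Require Import structures.
From mathcomp Require Import all_boot all_order all_algebra.
From mathcomp Require Import ring lra.
Set Implicit Arguments. Unset Strict Implicit. Unset Printing Implicit Defensive.
Import Order.TTheory GRing.Theory Num.Theory.
Local Open Scope ring_scope.

Section Tool.
Variable R : rcfType.
Implicit Types p q u v w a b c e : quat R.

Definition qone : quat R := Quat 1 0 0 0.
Definition qsc (r : R) q := Quat (r * q0 q) (r * q1 q) (r * q2 q) (r * q3 q).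
Definition ip p q : R := q0 p * q0 q + q1 p * q1 q + q2 p * q2 q + q3 p * q3 q.
Definition qopp q := Quat (- q0 q) (- q1 q) (- q2 q) (- q3 q).

Lemma qext p q : q0 p = q0 q -> q1 p = q1 q -> q2 p = q2 q -> q3 p = q3 q -> p = q.
Proof. by case: p; case: q => /= ???? ???? -> -> -> ->. Qed.

Ltac qsolve := repeat match goal with x : quat R |- _ => case: x => ???? end;
   first [apply: qext; rewrite /= ; ring | rewrite /=; ring].

Lemma qmulA p q r : qmul (qmul p q) r = qmul p (qmul q r). Proof. qsolve. Qed.
Lemma qmulDl p q r : qmul (qadd p q) r = qadd (qmul p r) (qmul q r). Proof. qsolve. Qed.
Lemma qmulDr p q r : qmul r (qadd p q) = qadd (qmul r p) (qmul r q). Proof. qsolve. Qed.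
Lemma qmulscl k p q : qmul (qsc k p) q = qsc k (qmul p q). Proof. qsolve. Qed.
Lemma qmulscr k p q : qmul p (qsc k q) = qsc k (qmul p q). Proof. qsolve. Qed.
Lemma qscA k l p : qsc k (qsc l p) = qsc (k * l) p. Proof. qsolve. Qed.
Lemma qsc1 p : qsc 1 p = p. Proof. qsolve. Qed.
Lemma qmul1 p : qmul p qone = p. Proof. qsolve. Qed.
Lemma qmul1l p : qmul qone p = p. Proof. qsolve. Qed.
Lemma qmulCJ p : qmul p (qconj p) = qsc (qnorm2 p) qone. Proof. rewrite /qnorm2; qsolve. Qed.
Lemma qmulJC p : qmul (qconj p) p = qsc (qnorm2 p) qone. Proof. rewrite /qnorm2; qsolve. Qed.
Lemma qconjM p q : qconj (qmul p q) = qmul (qconj q) (qconj p). Proof. qsolve. Qed.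
Lemma qconjK p : qconj (qconj p) = p. Proof. qsolve. Qed.
Lemma qconjsc k p : qconj (qsc k p) = qsc k (qconj p). Proof. qsolve. Qed.
Lemma qnorm2M p q : qnorm2 (qmul p q) = qnorm2 p * qnorm2 q. Proof. rewrite /qnorm2; qsolve. Qed.

Definition qf a b c x1 x2 x3 :=
  qadd (qadd (qmul (qmul (qconj x1) a) x2) (qmul (qmul (qconj x1) b) x3))
       (qmul (qmul (qconj x2) c) x3).

Lemma ord3_1 : (ord0 : 'I_3) = i1. Proof. exact: val_inj. Qed.
Lemma ord3_2 : (lift ord0 (ord0 : 'I_2)) = i2. Proof. exact: val_inj. Qed.
Lemma ord3_3 : (lift ord0 (lift ord0 (ord0 : 'I_1))) = i3. Proof. exact: val_inj. Qed.

Lemma vnorm3 (x : 'I_3 -> quat R) :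
  vnorm2 x = qnorm2 (x i1) + qnorm2 (x i2) + qnorm2 (x i3).
Proof.
rewrite /vnorm2 !big_ord_recl big_ord0 /=.
rewrite ord3_1 -ord3_2 -ord3_3. by rewrite addr0 addrA.
Qed.

Lemma quadform3 (A : 'M[quat R]_3) (x : 'I_3 -> quat R) : strictly_upper A ->
  quadform A x = qf (A i1 i2) (A i1 i3) (A i2 i3) (x i1) (x i2) (x i3).
Proof.
move=> HA; rewrite /quadform !big_ord_recl !big_ord0 /=.
rewrite -ord3_2 -ord3_3 -ord3_1.
rewrite !(HA ord0 ord0) // !(HA (lift ord0 ord0) (lift ord0 ord0)) //
  !(HA (lift ord0 (lift ord0 ord0)) (lift ord0 (lift ord0 ord0))) //
  !(HA (lift ord0 ord0) ord0) // !(HA (lift ord0 (lift ord0 ord0)) ord0) //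
  !(HA (lift ord0 (lift ord0 ord0)) (lift ord0 ord0)) //.
rewrite /qf.
move: (A _ _) (A _ _) (A _ _) (x _) (x _) (x _) => a b c y1 y2 y3.
qsolve.
Qed.

Lemma qnorm2_ge0 p : 0 <= qnorm2 p.
Proof. rewrite /qnorm2; case: p => a b c d /=; nra. Qed.

Lemma qnorm2_eq0 p : qnorm2 p = 0 -> p = qzero R.
Proof.
case: p => a b c d; rewrite /qnorm2 /= => h.
have ha : a ^+ 2 = 0 by nra.
have hb : b ^+ 2 = 0 by nra.
have hc : c ^+ 2 = 0 by nra.
have hd : d ^+ 2 = 0 by nra.
move/eqP: ha; move/eqP: hb; move/eqP: hc; move/eqP: hd.
rewrite !sqrf_eq0 => /eqP-> /eqP-> /eqP-> /eqP->; done.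
Qed.

Lemma qnorm2_0 : qnorm2 (qzero R) = 0. Proof. rewrite /qnorm2 /=; ring. Qed.

Lemma qmul_eq0 p q : qmul p q = qzero R <-> p = qzero R \/ q = qzero R.
Proof.
split.
  move=> h; have := qnorm2M p q; rewrite h qnorm2_0 => /esym/eqP.
  rewrite mulf_eq0 => /orP[/eqP/qnorm2_eq0|/eqP/qnorm2_eq0]; tauto.
by case=> ->; qsolve.
Qed.

Lemma ord3_cases (x : 'I_3) : x = i1 \/ x = i2 \/ x = i3.
Proof.
case: x => [[|[|[|m]]] hm].
- by left; apply: val_inj.
- by right; left; apply: val_inj.
- by right; right; apply: val_inj.
- by [].
Qed.

Lemma part2 (A : 'M[quat R]_3) : strictly_upper A ->
  (cycle_free A <-> qmul (qmul (A i1 i2) (A i1 i3)) (A i2 i3) = qzero R).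
Proof.
move=> HA.
have h21 := HA i2 i1 isT; have h31 := HA i3 i1 isT; have h32 := HA i3 i2 isT.
rewrite !qmul_eq0; split.
  case=> _ H.
  case: (eqVneq (A i1 i2) (qzero R)) => [|a0]; first tauto.
  case: (eqVneq (A i1 i3) (qzero R)) => [|b0]; first tauto.
  case: (eqVneq (A i2 i3) (qzero R)) => [|c0]; first tauto.
  exfalso; move: (H [:: i1; i2; i3] isT isT).
  by rewrite /= /graph_edge a0 b0 c0 /= orbT.
move=> Hz; split.
  by move=> i; rewrite /graph_edge (HA i i) // eqxx.
move=> s us; have : (size s <= 3)%N.
  by rewrite -(card_uniqP us); apply: leq_trans (max_card _) _; rewrite card_ord.
case: s us => [|x [|y [|z [|w s]]]] //= us _ _; move: us.
case: (ord3_cases x) => [->|[->|->]]; case: (ord3_cases y) => [->|[->|->]];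
 case: (ord3_cases z) => [->|[->|->]] => //=;
 rewrite /graph_edge ?h21 ?h31 ?h32 ?eqxx /= ?orbF;
 case: Hz => [[]|] ->; rewrite ?eqxx ?andbF //.
Qed.

Lemma qaddsc k l p : qadd (qsc k p) (qsc l p) = qsc (k + l) p. Proof. qsolve. Qed.
Lemma qscD k p q : qsc k (qadd p q) = qadd (qsc k p) (qsc k q). Proof. qsolve. Qed.
Lemma qnorm2D p q : qnorm2 (qadd p q) = qnorm2 p + qnorm2 q + 2 * ip p q.
Proof. rewrite /qnorm2 /ip; qsolve. Qed.
Lemma qnorm2sc k p : qnorm2 (qsc k p) = k ^+ 2 * qnorm2 p.
Proof. rewrite /qnorm2; qsolve. Qed.
Lemma qnorm2J p : qnorm2 (qconj p) = qnorm2 p. Proof. rewrite /qnorm2; qsolve. Qed.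
Lemma ipC p q : ip p q = ip q p. Proof. rewrite /ip; qsolve. Qed.
Lemma ipDr p q r : ip p (qadd q r) = ip p q + ip p r. Proof. rewrite /ip; qsolve. Qed.
Lemma ipDl p q r : ip (qadd q r) p = ip q p + ip r p. Proof. rewrite /ip; qsolve. Qed.
Lemma ipscr k p q : ip p (qsc k q) = k * ip p q. Proof. rewrite /ip; qsolve. Qed.
Lemma ipscl k p q : ip (qsc k p) q = k * ip p q. Proof. rewrite /ip; qsolve. Qed.
Lemma ip_adj u a v : ip u (qmul (qconj a) v) = ip (qmul a u) v.
Proof. rewrite /ip; qsolve. Qed.
Lemma ipnn p : ip p p = qnorm2 p. Proof. rewrite /ip /qnorm2; qsolve. Qed.
Lemma re_term x a y : q0 (qmul (qmul (qconj x) a) y) = ip x (qmul a y).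
Proof. rewrite /ip; qsolve. Qed.
Lemma qJJ p q : qmul p (qmul (qconj p) q) = qsc (qnorm2 p) q.
Proof. rewrite /qnorm2; qsolve. Qed.
Lemma qJJ' p q : qmul (qconj p) (qmul p q) = qsc (qnorm2 p) q.
Proof. rewrite /qnorm2; qsolve. Qed.
Lemma qJJl p q : qmul (qmul p (qconj p)) q = qsc (qnorm2 p) q.
Proof. rewrite /qnorm2; qsolve. Qed.
Lemma qconj1 : qconj qone = qone. Proof. qsolve. Qed.

Lemma ipCS u v : ip u v ^+ 2 <= qnorm2 u * qnorm2 v.
Proof.
have h := qnorm2_ge0 (qadd (qsc (qnorm2 v) u) (qsc (- ip u v) v)).
rewrite qnorm2D !qnorm2sc ipscl ipscr in h.
have hv := qnorm2_ge0 v; have hu := qnorm2_ge0 u.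
case: (ltrgt0P (qnorm2 v)) => [vp|vn|v0].
- nra.
- lra.
- move: v0 => /qnorm2_eq0 ->; rewrite /ip /= qnorm2_0; nra.
Qed.

Lemma ip2_le u v P Q : 0 <= P -> 0 <= Q -> qnorm2 u * qnorm2 v = P * Q ->
  2 * ip u v <= P + Q.
Proof.
move=> hP hQ e; have := ipCS u v; rewrite e => h.
rewrite leNgt; apply/negP => h2.
have h3 : (P + Q) ^+ 2 < (2 * ip u v) ^+ 2.
  by rewrite ltr_pXn2r //; [rewrite nnegrE; lra | rewrite nnegrE; lra].
have h4 : 0 <= (P - Q) ^+ 2 := sqr_ge0 _.
nra.
Qed.

Lemma q0add p q : q0 (qadd p q) = q0 p + q0 q. Proof. by []. Qed.

Lemma re_qf a b c x1 x2 x3 : q0 (qf a b c x1 x2 x3) =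
  ip x1 (qmul a x2) + ip x1 (qmul b x3) + ip x2 (qmul c x3).
Proof. by rewrite /qf !q0add !re_term. Qed.

Lemma re_bound a b c x1 x2 x3 s :
  0 < s -> 4 * s ^+ 2 = qnorm2 a + qnorm2 b + qnorm2 c ->
  0 < qnorm2 b + qnorm2 c -> ip (qmul a c) b <= 0 ->
  q0 (qf a b c x1 x2 x3) <= s * (qnorm2 x1 + qnorm2 x2 + qnorm2 x3).
Proof.
move=> s0 hs hP hr.
rewrite re_qf.
set P := qnorm2 b + qnorm2 c.
set y := qadd (qmul a x2) (qmul b x3).
set V1 := qadd (qsc (2 * s) x1) (qsc (-1) y).
set m := qadd (qsc (2 * s) c) (qmul (qconj a) b).
set V2 := qadd (qsc P x2) (qsc (-1) (qmul m x3)).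
have h1 : qnorm2 V1 = 4 * s ^+ 2 * qnorm2 x1
   - 4 * s * (ip x1 (qmul a x2) + ip x1 (qmul b x3))
   + (qnorm2 a * qnorm2 x2 + qnorm2 b * qnorm2 x3 + 2 * ip (qmul a x2) (qmul b x3)).
  rewrite /V1 /y !(qnorm2D, qnorm2sc, qnorm2M, ipscl, ipscr, ipDr, ipDl); ring.
have h2 : qnorm2 V2 = P ^+ 2 * qnorm2 x2
   - 2 * P * (2 * s * ip x2 (qmul c x3) + ip (qmul a x2) (qmul b x3))
   + (4 * s ^+ 2 * qnorm2 c + qnorm2 a * qnorm2 b + 4 * s * ip (qmul a c) b) * qnorm2 x3.
  rewrite /V2 /m !(qnorm2D, qnorm2sc, qnorm2M, ipscl, ipscr, ipDr, ipDl, qmulDl,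
    qmulscl, qnorm2J, qmulA, ip_adj); ring.
have g1 := qnorm2_ge0 V1; have g2 := qnorm2_ge0 V2; have g3 := qnorm2_ge0 x3.
have key : P * qnorm2 V1 + qnorm2 V2 - 4 * s * ip (qmul a c) b * qnorm2 x3 =
  4 * s * P * (s * (qnorm2 x1 + qnorm2 x2 + qnorm2 x3) -
   (ip x1 (qmul a x2) + ip x1 (qmul b x3) + ip x2 (qmul c x3))).
  rewrite h1 h2 /P.
  have -> : qnorm2 c = 4 * s ^+ 2 - qnorm2 a - qnorm2 b by rewrite hs; ring.
  ring.
have hpos : 0 <= P * qnorm2 V1 + qnorm2 V2 - 4 * s * ip (qmul a c) b * qnorm2 x3.
  have : 0 <= P * qnorm2 V1 by apply: mulr_ge0 => //; apply: ltW.
  have : 0 <= - (4 * s * ip (qmul a c) b) * qnorm2 x3.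
    apply: mulr_ge0 => //.
    have : 0 <= (4 * s) * (- ip (qmul a c) b) by apply: mulr_ge0; lra.
    lra.
  lra.
rewrite key in hpos.
have h4 : 0 < 4 * s * P by apply: mulr_gt0 => //; apply: mulr_gt0.
by rewrite -subr_ge0 -(pmulr_rge0 _ h4).
Qed.

Lemma qf_neg a b c x1 x2 x3 :
  qf (qsc (-1) a) (qsc (-1) b) (qsc (-1) c) x1 x2 x3 = qsc (-1) (qf a b c x1 x2 x3).
Proof. rewrite /qf; qsolve. Qed.

Lemma wit_qf a b c g t1 t2 t3 :
  qmul (qmul b (qconj c)) (qconj a) = g ->
  qf a b c (qsc t1 qone) (qsc t2 (qmul (qconj a) (qconj g)))
     (qsc t3 (qmul (qconj (qmul a c)) (qmul (qconj g) (qconj g)))) =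
  qsc (t1 * t2 * qnorm2 a + t1 * t3 * qnorm2 g + t2 * t3 * (qnorm2 a * qnorm2 c * qnorm2 g))
      (qconj g).
Proof.
move=> hg; set e := qconj g.
have T12 : qmul (qmul (qconj (qsc t1 qone)) a) (qsc t2 (qmul (qconj a) e)) =
   qsc (t1 * t2 * qnorm2 a) e.
  by rewrite !(qconjsc, qconj1, qmulscl, qmulscr, qmul1l, qscA) qJJ qscA; congr qsc; ring.
have T13 : qmul (qmul (qconj (qsc t1 qone)) b)
    (qsc t3 (qmul (qconj (qmul a c)) (qmul e e))) = qsc (t1 * t3 * qnorm2 g) e.
  rewrite !(qconjsc, qconj1, qmulscl, qmulscr, qmul1l, qscA) qconjM.
  rewrite -qmulA -[qmul b (qmul (qconj c) (qconj a))]qmulA hg /e qJJ qscA; congr qsc; ring.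
have T23 : qmul (qmul (qconj (qsc t2 (qmul (qconj a) e))) c)
    (qsc t3 (qmul (qconj (qmul a c)) (qmul e e))) =
    qsc (t2 * t3 * (qnorm2 a * qnorm2 c * qnorm2 g)) e.
  rewrite !(qconjsc, qmulscl, qmulscr, qscA) !qconjM qconjK !qmulA qJJ.
  rewrite !(qmulscl, qmulscr, qscA) qJJ !(qmulscl, qmulscr, qscA) qJJ' qscA.
  rewrite /e qnorm2J; congr qsc; ring.
rewrite /qf T12 T13 T23 !qaddsc; congr qsc; ring.
Qed.

Lemma qnorm2one : qnorm2 qone = 1. Proof. rewrite /qnorm2 /=; ring. Qed.

Lemma sqrt_facts (x : R) : 0 < x -> 0 < Num.sqrt x /\ Num.sqrt x ^+ 2 = x.
Proof. move=> hx; split; [by rewrite sqrtr_gt0 | by rewrite sqr_sqrtr // ltW]. Qed.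

Lemma lt_sqrt_sq (s X : R) : 0 <= s -> s ^+ 2 < X -> s < Num.sqrt X.
Proof.
move=> hs hX; have hX0 : 0 < X by apply: le_lt_trans hX; apply: sqr_ge0.
rewrite -(ger0_norm hs) -sqrtr_sqr ltr_sqrt //.
Qed.

Lemma scal_ineq (A B C s t1 t2 t3 : R) : 0 < A -> 0 < B -> 0 < C -> 0 < s ->
  4 * s ^+ 2 = A ^+ 2 + B ^+ 2 + C ^+ 2 ->
  t1 = (A ^+ 2 + B ^+ 2) / 4 -> t2 = A * s / 2 + B * C / 4 ->
  t3 = B * s / 2 + A * C / 4 ->
  s * (t1 ^+ 2 + t2 ^+ 2 + t3 ^+ 2) < A * t1 * t2 + B * t1 * t3 + C * t2 * t3.
Proof.
move=> hA hB hC hs e -> -> ->.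
rewrite -subr_gt0.
set u1 := (A ^+ 2 + B ^+ 2) / 4; set u2 := A * s / 2 + B * C / 4;
set u3 := B * s / 2 + A * C / 4.
have -> : A * u1 * u2 + B * u1 * u3 + C * u2 * u3 - s * (u1 ^+ 2 + u2 ^+ 2 + u3 ^+ 2)
  = A * B * C * (A ^+ 2 + B ^+ 2) / 16
    - ((A ^+ 2 + B ^+ 2) * s / 4 + A * B * C / 4) * (s ^+ 2 - (A ^+ 2 + B ^+ 2 + C ^+ 2) / 4).
  by rewrite /u1 /u2 /u3; field.
have -> : s ^+ 2 - (A ^+ 2 + B ^+ 2 + C ^+ 2) / 4 = 0 by rewrite -e; field.
rewrite mulr0 subr0; apply: divr_gt0 => //.
apply: mulr_gt0; first by rewrite !mulr_gt0.
have := sqr_ge0 B; have := exprn_gt0 2 hA; lra.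
Qed.

Lemma norm_sum_id (t1 t2 t3 n A C G : R) : n != 0 -> A != 0 -> C != 0 -> G != 0 ->
  (t1 / n) ^+ 2 * 1 + (t2 / (n * A * G)) ^+ 2 * (A ^+ 2 * G ^+ 2) +
  (t3 / (n * A * C * G ^+ 2)) ^+ 2 * (A ^+ 2 * C ^+ 2 * (G ^+ 2 * G ^+ 2)) =
  (t1^+2 + t2^+2 + t3^+2) / n^+2.
Proof. by move=> *; field; apply/and4P. Qed.

Lemma kappa_id (t1 t2 t3 n A B C G : R) : n != 0 -> A != 0 -> B != 0 -> C != 0 ->
  G = A * B * C ->
  (t1 / n * (t2 / (n * A * G)) * A ^+ 2 +
   t1 / n * (t3 / (n * A * C * G ^+ 2)) * G ^+ 2 +
   t2 / (n * A * G) * (t3 / (n * A * C * G ^+ 2)) *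
   (A ^+ 2 * C ^+ 2 * G ^+ 2)) ^+ 2 * G ^+ 2 =
  ((A * t1 * t2 + B * t1 * t3 + C * t2 * t3) / n ^+ 2) ^+ 2.
Proof. by move=> *; subst G; field; apply/and4P. Qed.

Lemma witness a b c : 0 < qnorm2 a -> 0 < qnorm2 b -> 0 < qnorm2 c ->
  exists x1 x2 x3, qnorm2 x1 + qnorm2 x2 + qnorm2 x3 = 1 /\
  Num.sqrt ((qnorm2 a + qnorm2 b + qnorm2 c) / 4) < qnorm (qf a b c x1 x2 x3).
Proof.
move=> ha hb hc.
have [hA hA2] := sqrt_facts ha; set A := Num.sqrt (qnorm2 a) in hA hA2.
have [hB hB2] := sqrt_facts hb; set B := Num.sqrt (qnorm2 b) in hB hB2.
have [hC hC2] := sqrt_facts hc; set C := Num.sqrt (qnorm2 c) in hC hC2.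
have hK : 0 < (qnorm2 a + qnorm2 b + qnorm2 c) / 4.
  by apply: divr_gt0 => //; lra.
have [hs hs2] := sqrt_facts hK; set s := Num.sqrt _ in hs hs2 *.
set g := qmul (qmul b (qconj c)) (qconj a).
have hg : qnorm2 g = (A * B * C) ^+ 2.
  by rewrite /g !qnorm2M !qnorm2J !exprMn hA2 hB2 hC2; ring.
set G := A * B * C in hg.
have hG : 0 < G by rewrite !mulr_gt0.
set t1 := (A ^+ 2 + B ^+ 2) / 4; set t2 := A * s / 2 + B * C / 4;
set t3 := B * s / 2 + A * C / 4.
have ht1 : 0 < t1 by apply: divr_gt0 => //; have := exprn_gt0 2 hA; have := sqr_ge0 B; lra.
have ht2 : 0 < t2.
  by apply: addr_gt0; apply: divr_gt0 => //; rewrite !mulr_gt0.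
have ht3 : 0 < t3.
  by apply: addr_gt0; apply: divr_gt0 => //; rewrite !mulr_gt0.
have hn0 : 0 < t1 ^+ 2 + t2 ^+ 2 + t3 ^+ 2.
  by have := exprn_gt0 2 ht1; have := sqr_ge0 t2; have := sqr_ge0 t3; lra.
have [hn hn2] := sqrt_facts hn0; set n := Num.sqrt _ in hn hn2.
have key := scal_ineq hA hB hC hs _ (erefl t1) (erefl t2) (erefl t3).
have e4 : 4 * s ^+ 2 = A ^+ 2 + B ^+ 2 + C ^+ 2 by rewrite hs2 hA2 hB2 hC2; field.
move/(_ e4) in key.
exists (qsc (t1 / n) qone), (qsc (t2 / (n * A * G)) (qmul (qconj a) (qconj g))),
  (qsc (t3 / (n * A * C * G ^+ 2)) (qmul (qconj (qmul a c)) (qmul (qconj g) (qconj g)))).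
split.
  rewrite !qnorm2sc !qnorm2M !qnorm2J hg qnorm2M qnorm2one -hA2 -hC2.
  have nn : n != 0 by rewrite gt_eqF.
  have nA : A != 0 by rewrite gt_eqF.
  have nC : C != 0 by rewrite gt_eqF.
  have nG : G != 0 by rewrite gt_eqF.
  by rewrite norm_sum_id // -hn2 divff // expf_neq0.
rewrite (@wit_qf a b c g _ _ _ (erefl _)) /qnorm qnorm2sc qnorm2J.
apply: lt_sqrt_sq; first exact: ltW.
rewrite hg -hA2 -hC2.
rewrite (@kappa_id t1 t2 t3 n A B C G) ?gt_eqF // hn2.
have hQ : s * (t1 ^+ 2 + t2 ^+ 2 + t3 ^+ 2) / (t1 ^+ 2 + t2 ^+ 2 + t3 ^+ 2) <
   (A * t1 * t2 + B * t1 * t3 + C * t2 * t3) / (t1 ^+ 2 + t2 ^+ 2 + t3 ^+ 2).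
  by rewrite ltr_pM2r // invr_gt0.
rewrite mulfK ?gt_eqF // in hQ.
rewrite ltr_pXn2r // ?nnegrE; first exact: ltW.
apply: ltW; apply: lt_trans hQ; exact: hs.
Qed.

Definition Wr a b c q := exists x1 x2 x3,
  qnorm2 x1 + qnorm2 x2 + qnorm2 x3 = 1 /\ qf a b c x1 x2 x3 = q.

Lemma qnorm_real (r : R) : qnorm (Quat r 0 0 0) = `|r|.
Proof.
rewrite /qnorm; have -> : qnorm2 (Quat r 0 0 0) = r ^+ 2 by rewrite /qnorm2 /=; ring.
exact: sqrtr_sqr.
Qed.

Lemma not_disk a b c : 0 < qnorm2 a -> 0 < qnorm2 b -> 0 < qnorm2 c ->
  ~ (exists r : R, 0 <= r /\ forall q, Wr a b c q <-> qnorm q <= r).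
Proof.
move=> ha hb hc [r [r0 Hr]].
have [x1 [x2 [x3 [hx hlt]]]] := witness ha hb hc.
set s := Num.sqrt _ in hlt.
have hK : 0 < (qnorm2 a + qnorm2 b + qnorm2 c) / 4.
  by apply: divr_gt0 => //; lra.
have [hs hs2] := sqrt_facts hK; rewrite -/s in hs hs2.
have hrs : s < r.
  apply: lt_le_trans hlt _; apply/Hr; by exists x1, x2, x3.
have e4 : 4 * s ^+ 2 = qnorm2 a + qnorm2 b + qnorm2 c by rewrite hs2; field.
have hP : 0 < qnorm2 b + qnorm2 c by lra.
case: (lerP (ip (qmul a c) b) 0) => hip.
  have : Wr a b c (Quat r 0 0 0) by apply/Hr; rewrite qnorm_real ger0_norm.
  case=> [y1 [y2 [y3 [hy hq]]]].
  have := re_bound y1 y2 y3 hs e4 hP hip.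
  by rewrite hq hy /=; lra.
have : Wr a b c (Quat (- r) 0 0 0) by apply/Hr; rewrite qnorm_real normrN ger0_norm.
case=> [y1 [y2 [y3 [hy hq]]]].
have hip' : ip (qmul (qsc (-1) a) (qsc (-1) c)) (qsc (-1) b) <= 0.
  rewrite qmulscl qmulscr qscA ipscl ipscr; lra.
have e4' : 4 * s ^+ 2 = qnorm2 (qsc (-1) a) + qnorm2 (qsc (-1) b) + qnorm2 (qsc (-1) c).
  by rewrite !qnorm2sc e4; ring.
have hP' : 0 < qnorm2 (qsc (-1) b) + qnorm2 (qsc (-1) c) by rewrite !qnorm2sc; lra.
have := re_bound y1 y2 y3 hs e4' hP' hip'.
by rewrite qf_neg hq hy /=; lra.
Qed.

Lemma sqrt_le_iff (x y : R) : 0 <= x -> 0 <= y -> (Num.sqrt x <= Num.sqrt y) = (x <= y).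
Proof. by move=> hx hy; rewrite ler_psqrt ?nnegrE. Qed.

Lemma solve_t (D N : R) : 0 < D -> 0 <= N -> N <= D / 4 ->
  exists t k : R, 0 < t /\ t * k * D = 1 /\ t ^+ 2 + k ^+ 2 * D * N = 1.
Proof.
move=> hD hN hND.
have h0 : 0 <= 1 - 4 * N / D.
  rewrite subr_ge0 ler_pdivrMr // mul1r; lra.
set d := Num.sqrt (1 - 4 * N / D).
have hd : 0 <= d by apply: sqrtr_ge0.
have hd2 : d ^+ 2 = 1 - 4 * N / D by rewrite sqr_sqrtr.
have ht0 : 0 < (1 + d) / 2 by apply: divr_gt0 => //; lra.
have [ht ht2] := sqrt_facts ht0; set t := Num.sqrt _ in ht ht2.
have nt : t != 0 by rewrite gt_eqF.
have nD : D != 0 by rewrite gt_eqF.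
have nd : 1 + d != 0 by rewrite gt_eqF //; lra.
exists t, (1 / (t * D)); split => //; split.
  by field; rewrite ?nt ?nD.
have -> : (1 / (t * D)) ^+ 2 * D * N = N / D / t ^+ 2.
  by field; rewrite ?nt ?nD.
rewrite ht2.
have -> : N / D = (1 - d ^+ 2) / 4 by rewrite hd2; field; rewrite ?nD.
by field; rewrite ?nd.
Qed.

Lemma le_quarter (n c d : R) : 0 <= n -> 0 <= c -> n + c = 1 -> 0 <= d ->
  n * d * c <= d / 4.
Proof.
move=> hn hc e hd.
have : n * c <= 1 / 4 by have := sqr_ge0 (n - c); nra.
move=> h; have := ler_wpM2l hd h.
have -> : n * d * c = d * (n * c) by ring.
by rewrite mulrC mul1r mulrC.
Qed.

Lemma qnorm2_le0 p : qnorm2 p <= 0 -> p = qzero R.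
Proof. move=> h; apply: qnorm2_eq0; have := qnorm2_ge0 p; lra. Qed.

Lemma Wr_zero a b c : Wr a b c (qzero R) ->
  (forall q, qnorm2 q <= 0 -> Wr a b c q).
Proof. by move=> h q /qnorm2_le0 ->. Qed.

Lemma disk_gen a b c (D : R) : 0 <= D ->
  (forall x1 x2 x3, qnorm2 x1 + qnorm2 x2 + qnorm2 x3 = 1 ->
     qnorm2 (qf a b c x1 x2 x3) <= D / 4) ->
  (forall q, qnorm2 q <= D / 4 -> Wr a b c q) ->
  exists r : R, 0 <= r /\ forall q, Wr a b c q <-> qnorm q <= r.
Proof.
move=> hD hb he; have hD4 : 0 <= D / 4 by apply: divr_ge0.
exists (Num.sqrt (D / 4)); split; first exact: sqrtr_ge0.
move=> q; split.
  case=> [x1 [x2 [x3 [hx <-]]]].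
  by rewrite /qnorm sqrt_le_iff ?qnorm2_ge0 // hb.
by rewrite /qnorm sqrt_le_iff ?qnorm2_ge0 // => /he.
Qed.

Lemma qf_c0 a b x1 x2 x3 :
  qf a b (qzero R) x1 x2 x3 = qmul (qconj x1) (qadd (qmul a x2) (qmul b x3)).
Proof. rewrite /qf; qsolve. Qed.
Lemma qf_a0 b c x1 x2 x3 :
  qf (qzero R) b c x1 x2 x3 = qmul (qadd (qmul (qconj x1) b) (qmul (qconj x2) c)) x3.
Proof. rewrite /qf; qsolve. Qed.
Lemma qf_b0 a c x1 x2 x3 :
  qf a (qzero R) c x1 x2 x3 =
  qadd (qmul (qmul (qconj x1) a) x2) (qmul (qmul (qconj x2) c) x3).
Proof. rewrite /qf; qsolve. Qed.

Lemma wit_c0 a b q t k :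
  qf a b (qzero R) (qsc t qone) (qsc k (qmul (qconj a) q)) (qsc k (qmul (qconj b) q))
  = qsc (t * k * (qnorm2 a + qnorm2 b)) q.
Proof. rewrite /qf /qnorm2; qsolve. Qed.
Lemma wit_a0 b c q t k :
  qf (qzero R) b c (qsc k (qmul b (qconj q))) (qsc k (qmul c (qconj q))) (qsc t qone)
  = qsc (t * k * (qnorm2 b + qnorm2 c)) q.
Proof. rewrite /qf /qnorm2; qsolve. Qed.
Lemma wit_b0 a c q t k :
  qf a (qzero R) c (qsc k (qmul a (qconj q))) (qsc t qone) (qsc k (qmul (qconj c) q))
  = qsc (t * k * (qnorm2 a + qnorm2 c)) q.
Proof. rewrite /qf /qnorm2; qsolve. Qed.

Lemma Wr0 a b c : Wr a b c (qzero R).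
Proof.
exists qone, (qzero R), (qzero R); split.
  by rewrite qnorm2one qnorm2_0; ring.
rewrite /qf; qsolve.
Qed.

Lemma qnorm2_sum_eq0 p q : 0 <= qnorm2 p + qnorm2 q -> qnorm2 p + qnorm2 q <= 0 ->
  p = qzero R /\ q = qzero R.
Proof.
move=> _ h; have := qnorm2_ge0 p; have := qnorm2_ge0 q => hq hp.
split; apply: qnorm2_le0; lra.
Qed.

Lemma disk_c0 a b :
  exists r : R, 0 <= r /\ forall q, Wr a b (qzero R) q <-> qnorm q <= r.
Proof.
have hD : 0 <= qnorm2 a + qnorm2 b by have := qnorm2_ge0 a; have := qnorm2_ge0 b; lra.
apply: (disk_gen hD).
  move=> x1 x2 x3 hx; rewrite qf_c0 qnorm2M qnorm2J qnorm2D !qnorm2M.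
  have hc := @ip2_le (qmul a x2) (qmul b x3) (qnorm2 a * qnorm2 x3) (qnorm2 b * qnorm2 x2).
  rewrite !qnorm2M in hc.
  have := hc (mulr_ge0 (qnorm2_ge0 _) (qnorm2_ge0 _)) (mulr_ge0 (qnorm2_ge0 _) (qnorm2_ge0 _)).
  move=> /(_ (ltac:(ring))) hc'.
  have hq := @le_quarter (qnorm2 x1) (qnorm2 x2 + qnorm2 x3) (qnorm2 a + qnorm2 b)
    (qnorm2_ge0 _) (addr_ge0 (qnorm2_ge0 _) (qnorm2_ge0 _)) ltac:(rewrite -hx; ring) hD.
  apply: le_trans hq.
  have hx1 := qnorm2_ge0 x1.
  have : qnorm2 a * qnorm2 x2 + qnorm2 b * qnorm2 x3 + 2 * ip (qmul a x2) (qmul b x3)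
     <= (qnorm2 a + qnorm2 b) * (qnorm2 x2 + qnorm2 x3) by lra.
  move=> h; have := ler_wpM2l hx1 h; lra.
move=> q hq.
case: (ltrgt0P (qnorm2 a + qnorm2 b)) => [Dp|Dn|D0].
- have [t [k [ht [htk hs]]]] := solve_t Dp (qnorm2_ge0 q) hq.
  exists (qsc t qone), (qsc k (qmul (qconj a) q)), (qsc k (qmul (qconj b) q)); split.
    by rewrite !qnorm2sc !qnorm2M !qnorm2J qnorm2one -[RHS]hs; ring.
  by rewrite wit_c0 htk qsc1.
- lra.
- apply: Wr_zero; first exact: Wr0.
  by rewrite D0 mul0r in hq.
Qed.

Lemma disk_a0 b c :
  exists r : R, 0 <= r /\ forall q, Wr (qzero R) b c q <-> qnorm q <= r.
Proof.
have hD : 0 <= qnorm2 b + qnorm2 c by have := qnorm2_ge0 b; have := qnorm2_ge0 c; lra.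
apply: (disk_gen hD).
  move=> x1 x2 x3 hx; rewrite qf_a0 qnorm2M qnorm2D !qnorm2M !qnorm2J.
  have hc := @ip2_le (qmul (qconj x1) b) (qmul (qconj x2) c)
     (qnorm2 b * qnorm2 x2) (qnorm2 c * qnorm2 x1).
  rewrite !qnorm2M !qnorm2J in hc.
  have := hc (mulr_ge0 (qnorm2_ge0 _) (qnorm2_ge0 _)) (mulr_ge0 (qnorm2_ge0 _) (qnorm2_ge0 _)).
  move=> /(_ (ltac:(ring))) hc'.
  have hq := @le_quarter (qnorm2 x3) (qnorm2 x1 + qnorm2 x2) (qnorm2 b + qnorm2 c)
    (qnorm2_ge0 _) (addr_ge0 (qnorm2_ge0 _) (qnorm2_ge0 _)) ltac:(rewrite -hx; ring) hD.
  apply: le_trans hq.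
  have hx3 := qnorm2_ge0 x3.
  have : qnorm2 x1 * qnorm2 b + qnorm2 x2 * qnorm2 c +
     2 * ip (qmul (qconj x1) b) (qmul (qconj x2) c)
     <= (qnorm2 b + qnorm2 c) * (qnorm2 x1 + qnorm2 x2) by lra.
  move=> h; have := ler_wpM2r hx3 h; lra.
move=> q hq.
case: (ltrgt0P (qnorm2 b + qnorm2 c)) => [Dp|Dn|D0].
- have [t [k [ht [htk hs]]]] := solve_t Dp (qnorm2_ge0 q) hq.
  exists (qsc k (qmul b (qconj q))), (qsc k (qmul c (qconj q))), (qsc t qone); split.
    by rewrite !qnorm2sc !qnorm2M !qnorm2J qnorm2one -[RHS]hs; ring.
  by rewrite wit_a0 htk qsc1.
- lra.
- apply: Wr_zero; first exact: Wr0.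
  by rewrite D0 mul0r in hq.
Qed.

Lemma disk_b0 a c :
  exists r : R, 0 <= r /\ forall q, Wr a (qzero R) c q <-> qnorm q <= r.
Proof.
have hD : 0 <= qnorm2 a + qnorm2 c by have := qnorm2_ge0 a; have := qnorm2_ge0 c; lra.
apply: (disk_gen hD).
  move=> x1 x2 x3 hx; rewrite qf_b0 qnorm2D !qnorm2M !qnorm2J.
  have hc := @ip2_le (qmul (qmul (qconj x1) a) x2) (qmul (qmul (qconj x2) c) x3)
     (qnorm2 x2 * qnorm2 a * qnorm2 x3) (qnorm2 x2 * qnorm2 c * qnorm2 x1).
  rewrite !qnorm2M !qnorm2J in hc.
  have g2 := qnorm2_ge0 x2; have g1 := qnorm2_ge0 x1; have g3 := qnorm2_ge0 x3.
  have ga := qnorm2_ge0 a; have gc := qnorm2_ge0 c.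
  have := hc (mulr_ge0 (mulr_ge0 g2 ga) g3) (mulr_ge0 (mulr_ge0 g2 gc) g1).
  move=> /(_ (ltac:(ring))) hc'.
  have hq := @le_quarter (qnorm2 x2) (qnorm2 x1 + qnorm2 x3) (qnorm2 a + qnorm2 c)
    g2 (addr_ge0 g1 g3) ltac:(rewrite -hx; ring) hD.
  apply: le_trans hq.
  have -> : qnorm2 x2 * (qnorm2 a + qnorm2 c) * (qnorm2 x1 + qnorm2 x3) =
     qnorm2 x1 * qnorm2 a * qnorm2 x2 + qnorm2 x2 * qnorm2 c * qnorm2 x3 +
     (qnorm2 x2 * qnorm2 a * qnorm2 x3 + qnorm2 x2 * qnorm2 c * qnorm2 x1) by ring.
  lra.
move=> q hq.
case: (ltrgt0P (qnorm2 a + qnorm2 c)) => [Dp|Dn|D0].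
- have [t [k [ht [htk hs]]]] := solve_t Dp (qnorm2_ge0 q) hq.
  exists (qsc k (qmul a (qconj q))), (qsc t qone), (qsc k (qmul (qconj c) q)); split.
    by rewrite !qnorm2sc !qnorm2M !qnorm2J qnorm2one -[RHS]hs; ring.
  by rewrite wit_b0 htk qsc1.
- lra.
- apply: Wr_zero; first exact: Wr0.
  by rewrite D0 mul0r in hq.
Qed.

Lemma numrange_Wr (A : 'M[quat R]_3) q : strictly_upper A ->
  (numrange A q <-> Wr (A i1 i2) (A i1 i3) (A i2 i3) q).
Proof.
move=> HA; split.
  case=> x [hx hq]; exists (x i1), (x i2), (x i3).
  by rewrite -vnorm3 -quadform3.
case=> [x1 [x2 [x3 [hx hq]]]].
exists (fun i : 'I_3 => if val i == 0%N then x1 else if val i == 1%N then x2 else x3).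
by rewrite vnorm3 quadform3.
Qed.

Lemma qnorm2_gt0 p : p <> qzero R -> 0 < qnorm2 p.
Proof.
move=> hp; rewrite lt_def qnorm2_ge0 andbT; apply/eqP => /qnorm2_eq0; exact: hp.
Qed.

Lemma disk_iff a b c :
  (exists r : R, 0 <= r /\ forall q, Wr a b c q <-> qnorm q <= r) <->
  (a = qzero R \/ b = qzero R \/ c = qzero R).
Proof.
split.
  move=> H.
  case: (eqVneq a (qzero R)) => [|ha]; first tauto.
  case: (eqVneq b (qzero R)) => [|hb]; first tauto.
  case: (eqVneq c (qzero R)) => [|hc]; first tauto.
  exfalso; apply: (@not_disk a b c) => //; apply: qnorm2_gt0; exact/eqP.
case=> [->|[->|->]]; [exact: disk_a0 | exact: disk_b0 | exact: disk_c0].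
Qed.

End Tool.

Theorem theorem5p1 (R : rcfType) (A : 'M[quat R]_3) :
  strictly_upper A ->
  (is_closed_disk0 (numrange A) <-> cycle_free A) /\
  (cycle_free A <-> qmul (qmul (A i1 i2) (A i1 i3)) (A i2 i3) = qzero R).
Proof.
move=> HA; have P2 := part2 HA; split => //.
rewrite P2 !qmul_eq0.
have DI := disk_iff (A i1 i2) (A i1 i3) (A i2 i3).
have E : is_closed_disk0 (numrange A) <->
   (exists r : R, 0 <= r /\ forall q, Wr (A i1 i2) (A i1 i3) (A i2 i3) q <-> qnorm q <= r).
  rewrite /is_closed_disk0.
  split; case=> r [r0 H]; exists r; split => // q; rewrite -H.
    by rewrite numrange_Wr.
  by rewrite numrange_Wr.
tauto.
Qed.
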